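(* Let $n\ge 1$, let $\mathcal{C}$ be the set of maximal flags of $\mathrm{PG}(n,q)$ and fix a point $X$. For $i,j\in[n+1]$ and any maximal flag $c$ of type $i$ with respect to $X$, the number $Q_{ij}$ of maximal flags of type $j$ with respect to $X$ that are opposite to $c$ equals $$Q_{ij}=\begin{cases}0&\text{if } i+j<n+2,\\ (q-1+\delta_{i+j,n+2})\,q^{\frac12(n^2-n)+j-2}&\text{if } i+j\ge n+2.\end{cases}$$
   Context: A maximal flag of $\mathrm{PG}(n,q)$ (projective space of $\mathbb{F}_q^{n+1}$) is $(U_1,\dots,U_n)$ with $U_1\subset\cdots\subset U_n$ subspaces of $\mathbb{F}_q^{n+1}$, $\dim U_i=i$; set $U_0=0$, $U_{n+1}=\mathbb{F}_q^{n+1}$. Two maximal flags $(U_i)$, $(V_i)$ are opposite if $U_i\cap V_{n+1-i}=0$ for all $i\in[n]$. The type of a maximal flag $(U_1,\dots,U_n)$ with respect to a point (1-dimensional subspace) $X$ is the smallest $k\in[n]$ with $X\subseteq U_k$, and $n+1$ if no such $k$ exists. $\delta$ is the Kronecker delta. *)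

(* Defs.v *)
From HB Require Import structures.
From mathcomp Require Import all_boot all_order all_algebra all_field.
Set Implicit Arguments. Unset Strict Implicit. Unset Printing Implicit Defensive.
Import GRing.Theory.
Import VectorInternalTheory.

HB.instance Definition _ (F : finFieldType) (m : nat) :=
  [Finite of {vspace 'rV[F]_m} by <:].

(* A (candidate) flag of PG(n,q): the n subspaces U_1, ..., U_n of F^(n+1),
   stored as f : 'I_n -> subspaces, with U_k = f (k-1). *)
Definition flag (F : finFieldType) (n : nat) := {ffun 'I_n -> {vspace 'rV[F]_n.+1}}.

(* U_k for k = 0..n+1, with U_0 = 0 and U_(n+1) = F^(n+1). *)
Definition flagU (F : finFieldType) (n : nat) (f : flag F n) (k : nat)
  : {vspace 'rV[F]_n.+1} :=
  if k is k'.+1 then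
    (if @insub _ (fun x => x < n) 'I_n k' is Some o then f o else fullv)%VS
  else 0%VS.

Definition is_max_flag (F : finFieldType) (n : nat) (f : flag F n) : bool :=
  [forall k : 'I_n, \dim (flagU f k.+1) == k.+1] &&
  [forall k : 'I_n, (flagU f k.+1 <= flagU f k.+2)%VS].

Definition opposite (F : finFieldType) (n : nat) (f g : flag F n) : bool :=
  [forall k : 'I_n, (flagU f k.+1 :&: flagU g (n.+1 - k.+1))%VS == 0%VS].

(* type of f w.r.t. X: smallest k in [n] with X <= U_k, and n+1 if none *)
Definition flag_type (F : finFieldType) (n : nat) (f : flag F n)
  (X : {vspace 'rV[F]_n.+1}) : nat :=
  (find (fun k => (X <= flagU f k)%VS) (iota 1 n)).+1.

(* Main.v *)
Require Import Defs.
From HB Require Import structures.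
From mathcomp Require Import all_boot all_order all_algebra all_field.
From mathcomp Require Import zify.
Import GRing.Theory Num.Theory.
Set Implicit Arguments. Unset Strict Implicit. Unset Printing Implicit Defensive.

Lemma card_dep (T1 T2 : finType) (A : pred T2) (B : T2 -> T1 -> bool) k :
  (forall y, A y -> #|[pred x | B y x]| = k) ->
  #|[set p : T1 * T2 | A p.2 && B p.2 p.1]| = (#|[set y | A y]| * k)%N.
Proof.
move=> HB.
pose G (p : T1 * T2) := (if A p.2 && B p.2 p.1 then 1 else 0)%N.
have -> : #|[set p : T1 * T2 | A p.2 && B p.2 p.1]| = \sum_p G p.
  by rewrite -sum1_card big_mkcond /=; apply: eq_bigr => p _; rewrite inE.
have := pair_bigA addn (fun i j => G (i, j)); rewrite /= => <-.
rewrite exchange_big /= -sum1_card big_distrl /= [RHS]big_mkcond /=.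
apply: eq_bigr => y _; rewrite inE /G /=.
case Ay: (A y).
  rewrite mul1n -(HB y Ay) -sum1_card [RHS]big_mkcond /=; apply: eq_bigr => x _.
  by rewrite !inE.
by apply: big1.
Qed.

Ltac clia := repeat match goal with
  | H : is_true (leq _ _) |- _ => revert H
  | H : @eq nat _ _ |- _ => revert H
  end; repeat match goal with H : _ |- _ => clear H end; rewrite -?subn1; intros; lia.

Section Gen.
Variables (F : finFieldType) (N : nat).
Local Notation vT := 'rV[F]_N.
Local Notation sp := {vspace vT}.


Definition gU (m : nat) (W : sp) (f : {ffun 'I_m -> sp}) (k : nat) : sp :=
  if k is k'.+1 then
    (if @insub _ (fun x => x < m) 'I_m k' is Some o then f o else W)%VS
  else 0%VS.

Arguments gU : simpl never.

Definition gmax m W (f : {ffun 'I_m -> sp}) : bool :=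
  [forall k : 'I_m, \dim (gU W f k.+1) == k.+1] &&
  [forall k : 'I_m, (gU W f k.+1 <= gU W f k.+2)%VS].

Definition gopp m W (f g : {ffun 'I_m -> sp}) : bool :=
  [forall k : 'I_m, (gU W f k.+1 :&: gU W g (m.+1 - k.+1))%VS == 0%VS].

Lemma gU0 m W f : @gU m W f 0 = 0%VS. Proof. by []. Qed.
Lemma gU_lt m W f (k : 'I_m) : @gU m W f k.+1 = f k.
Proof. by rewrite /gU valK. Qed.
Lemma gU_ltn m W f k (lt : (k < m)%N) : @gU m W f k.+1 = f (Ordinal lt).
Proof. by rewrite (gU_lt W f (Ordinal lt)). Qed.
Lemma gU_ge m W f k : (m <= k)%N -> @gU m W f k.+1 = W.
Proof. by move=> le; rewrite /gU insubN // -leqNgt. Qed.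

Section GmaxFacts.
Variables (m : nat) (W : sp) (f : {ffun 'I_m -> sp}).
Hypothesis dW : \dim W = m.+1.
Hypothesis mf : gmax W f.

Lemma gmax_dim k : (k <= m.+1)%N -> \dim (gU W f k) = k.
Proof.
case: k => [|k] le; first by rewrite gU0 dimv0.
case: (ltnP k m) => lt; last first.
  have -> : k = m by clia.
  by rewrite gU_ge.
by case/andP: mf => /forallP /(_ (Ordinal lt)) /eqP.
Qed.

Lemma gmax_step k : (k <= m)%N -> (gU W f k <= gU W f k.+1)%VS.
Proof.
case: k => [|k] le; first by rewrite gU0 sub0v.
by case/andP: mf => _ /forallP /(_ (Ordinal le)).
Qed.

Lemma gmax_mono a b : (a <= b <= m.+1)%N -> (gU W f a <= gU W f b)%VS.
Proof.
move=> /andP [ab bm]; elim: b ab bm => [|b IH] ab bm.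
  have -> : a = 0%N by clia.
  by [].
case: (ltnP b a) => ba.
  have -> : a = b.+1 by clia.
  by [].
apply: subv_trans (IH ba (ltnW bm)) (gmax_step _); clia.
Qed.

Lemma gmax_sub k : (gU W f k <= W)%VS.
Proof.
case: (leqP k m.+1) => le.
  have := @gmax_mono k m.+1; rewrite le leqnn => /(_ isT).
  by rewrite (@gU_ge m W f m).
by case: k le => // k le; rewrite gU_ge //; clia.
Qed.
End GmaxFacts.

Lemma goppP m W (f g : {ffun 'I_m -> sp}) : gopp W f g -> forall k, k < m ->
  (gU W f k.+1 :&: gU W g (m.+1 - k.+1))%VS = 0%VS.
Proof. by move=> /forallP H k lt; apply/eqP; exact: (H (Ordinal lt)). Qed.

Lemma gmaxP m W (f : {ffun 'I_m -> sp}) :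
  (forall k, (k <= m)%N -> \dim (gU W f k.+1) = k.+1) ->
  (forall k, (k < m)%N -> (gU W f k.+1 <= gU W f k.+2)%VS) -> gmax W f.
Proof.
move=> H1 H2; apply/andP; split; apply/forallP => k.
  by rewrite H1 // ltnW.
by apply: H2.
Qed.

Local Open Scope ring_scope.
Lemma capv_line (W : sp) v : v \notin W -> (W :&: <[v]> = 0)%VS.
Proof.
move=> vW; apply/eqP; rewrite -subv0; apply/subvP => x /memv_capP [xW /vlineP [a xa]].
rewrite memv0; apply/eqP; move: xW; rewrite xa.
have [->|a0] := eqVneq a 0; first by rewrite scale0r.
move=> H; case/negP: vW; rewrite -[v](scalerK a0); exact: memvZ.
Qed.

Lemma line_cap (W D : sp) v : v \notin W -> (D <= W)%VS -> ((<[v]> + D) :&: W = D)%VS.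
Proof.
move=> vW DW; rewrite capvC -vspace_modr // capv_line // add0v //.
Qed.

Lemma notin_neq0 (W : sp) v : v \notin W -> v != 0.
Proof. by apply: contraNneq => ->; rewrite mem0v. Qed.

Lemma line_dim (W D : sp) v : v \notin W -> (D <= W)%VS -> \dim (<[v]> + D) = (\dim D).+1.
Proof.
move=> vW DW; have := dimv_sum_cap <[v]> D.
have ->: (<[v]> :&: D = 0)%VS.
  apply/eqP; rewrite -subv0 -(capv_line vW) capvC; exact: capvS.
by rewrite dimv0 addn0 dim_vline (notin_neq0 vW) => ->; rewrite add1n.
Qed.

Lemma sub_line_cap (W D Y : sp) v : v \notin W -> (D <= W)%VS -> (Y <= W)%VS ->
  (Y <= <[v]> + D)%VS = (Y <= D)%VS.
Proof.
move=> vW DW YW; apply/idP/idP => H.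
  by rewrite -(line_cap vW DW) subv_cap H YW.
by apply: subv_trans H (addvSr _ _).
Qed.

Lemma line_inj (W : sp) e h1 h2 : e \notin W -> h1 \in W -> h2 \in W ->
  <[e + h1]>%VS = <[e + h2]>%VS -> h1 = h2.
Proof.
move=> eW h1W h2W E.
have : e + h2 \in <[e + h1]>%VS by rewrite E memv_line.
case/vlineP => a Ea.
have [a1|a1] := eqVneq a 1.
  by move: Ea; rewrite a1 scale1r => /addrI.
case/negP: eW.
have : (1 - a) *: e = a *: h1 - h2.
  have Ea' : a *: e = e + h2 - a *: h1 by rewrite Ea scalerDr addrK.
  by rewrite scalerBl scale1r Ea' opprB addrCA opprD addNKr.
move=> E2; rewrite -[e](scalerK (a := 1 - a)); last by rewrite subr_eq0 eq_sym.
by rewrite E2 memvZ // memvB // memvZ.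
Qed.

Lemma mem_line_add (W D : sp) e h : e \notin W -> h \in W -> (D <= W)%VS ->
  (e \in <[e + h]> + D)%VS = (h \in D).
Proof.
move=> eW hW DW; apply/idP/idP => H.
  case/memv_addP: H => u /vlineP [a ->] [x xD Ex].
  have [a1|a1] := eqVneq a 1.
    move: Ex; rewrite a1 scale1r => Ex.
    have : h + x == 0 by apply/eqP; apply: (@addrI _ e); rewrite addr0 addrA -Ex.
    by rewrite addr_eq0 => /eqP ->; rewrite memvN.
  case/negP: eW.
  have E2 : (1 - a) *: e = a *: h + x.
    by rewrite scalerBl scale1r {1}Ex scalerDr addrC !addrA addNr add0r.
  rewrite -[e](scalerK (a := 1 - a)); last by rewrite subr_eq0 eq_sym.
  by rewrite E2 memvZ // memvD // ?memvZ // (subvP DW).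
have E : (e + h) - h = e by rewrite addrK.
rewrite -{1}E.
apply: memvB; first by apply: (subvP (addvSl _ _)); exact: memv_line.
exact: (subvP (addvSr _ _)).
Qed.

Lemma full_line (W W' : sp) v : \dim W = (\dim W').+1 -> (W' <= W)%VS -> v \in W -> v \notin W' ->
  (<[v]> + W' = W)%VS.
Proof.
move=> dW W'W vW vW'; apply/eqP; rewrite eqEdim subv_add -memvE W'W vW /=.
by rewrite (line_dim vW') // dW.
Qed.

Lemma point_line (Y : sp) : \dim Y = 1%N -> Y = <[vpick Y]>%VS.
Proof.
move=> dY; have Y0 : Y != 0%VS by rewrite -dimv_eq0 dY.
apply/eqP; rewrite eq_sym eqEdim -memvE memv_pick dY dim_vline.
by rewrite vpick0 Y0.
Qed.


Lemma vline_scale (a : F) (v : vT) : a != 0 -> (<[a *: v]> = <[v]>)%VS.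
Proof.
move=> a0; have [->|v0] := eqVneq v 0; first by rewrite scaler0.
apply/eqP; rewrite eqEdim -memvE memvZ ?memv_line // !dim_vline v0.
by rewrite scaler_eq0 negb_or a0 v0.
Qed.

Lemma notin_add (W : sp) e h : e \notin W -> h \in W -> e + h \notin W.
Proof.
move=> eW hW; apply: contra eW => H.
by rewrite -(addrK h e) memvB.
Qed.

Local Close Scope ring_scope.

Section Step.
Variables (m : nat) (W : sp) (c : {ffun 'I_m.+1 -> sp}).
Hypotheses (dW : \dim W = m.+2) (mc : gmax W c).

Definition Wr := gU W c m.+1.
Definition cres := [ffun k : 'I_m => c (widen_ord (leqnSn m) k)].

Lemma gU_cres k : k <= m.+1 -> gU Wr cres k = gU W c k.
Proof.
case: k => [|k] le //; case: (ltnP k m) => lt.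
  rewrite gU_ltn ffunE (gU_ltn _ _ (leqW lt)); congr (c _); exact: val_inj.
have -> : k = m by clia.
by rewrite gU_ge.
Qed.




Lemma dWr : \dim Wr = m.+1.
Proof. exact: gmax_dim dW mc _ _. Qed.


Lemma WrW : (Wr <= W)%VS.
Proof. exact: gmax_sub mc _. Qed.

Lemma mcres : gmax Wr cres.
Proof.
apply: gmaxP => k le.
  by rewrite gU_cres // (gmax_dim dW mc) //; clia.
rewrite gU_cres ?gU_cres; try clia.
by apply: (gmax_step mc); clia.
Qed.

Variable e : vT.
Hypotheses (eW : e \in W) (eWr : e \notin Wr).

Definition phi (p : vT * {ffun 'I_m -> sp}) : {ffun 'I_m.+1 -> sp} :=
  [ffun k : 'I_m.+1 => (<[e + p.1]> + gU Wr p.2 k)%VS].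

Lemma gU_phi p k : p.1 \in Wr -> k <= m.+1 -> gU W (phi p) k.+1 = (<[e + p.1]> + gU Wr p.2 k)%VS.
Proof.
move=> hW le; case: (ltnP k m.+1) => lt.
  by rewrite gU_ltn ffunE.
have -> : k = m.+1 by clia.
rewrite !gU_ge //; apply/esym/full_line.
- by rewrite dW dWr.
- exact: WrW.
- by rewrite memvD // (subvP WrW).
- exact: notin_add.
Qed.

Lemma phi_ok p : p.1 \in Wr -> gmax Wr p.2 -> gopp Wr cres p.2 ->
  gmax W (phi p) && gopp W c (phi p).
Proof.
move=> hW md op; have vW := notin_add eWr hW.
apply/andP; split.
  apply: gmaxP => k le.
    by rewrite gU_phi // (line_dim vW) ?(@gmax_dim _ _ _ dWr md) // (gmax_sub md).
  rewrite gU_phi ?gU_phi //; try clia.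
  apply: addvS => //; apply: (gmax_step md); clia.
apply/forallP => k.
have -> : (m.+2 - k.+1 = (m - k).+1)%N by have := ltn_ord k; clia.
rewrite gU_phi //; last by clia.
have UW : (gU W c k.+1 <= Wr)%VS by apply: (gmax_mono mc); have := ltn_ord k; clia.
rewrite -(capv_idPl UW) -capvA (capvC Wr) line_cap //; last exact: (gmax_sub md).

case: (ltnP k m) => lt.
  have := goppP op lt; rewrite gU_cres; last by clia.
  by rewrite subSS => ->.
have -> : (m - k = 0)%N by clia.
by rewrite gU0 capv0.
Qed.

Lemma phi_inj : {in [pred p | (p.1 \in Wr) && gmax Wr p.2] &, injective phi}.
Proof.
move=> [h1 d1] [h2 d2] /andP [/= h1W md1] /andP [/= h2W md2] E.
have E0 := congr1 (fun f : {ffun 'I_m.+1 -> sp} => f ord0) E; rewrite /= !ffunE /= ?gU0 !addv0 in E0.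
have eh := line_inj eWr h1W h2W E0; subst h2; congr pair.
apply/ffunP => k.
have := congr1 (fun f : {ffun 'I_m.+1 -> sp} => f (lift ord0 k)) E; rewrite /= !ffunE /= => Ek.
rewrite -(gU_lt Wr d1) -(gU_lt Wr d2).
rewrite -(line_cap (notin_add eWr h1W) (gmax_sub md1 _)).
rewrite -(line_cap (notin_add eWr h1W) (gmax_sub md2 k.+1)).
by rewrite Ek.
Qed.

Lemma phi_surj d : gmax W d -> gopp W c d ->
  exists2 p, [&& p.1 \in Wr, gmax Wr p.2 & gopp Wr cres p.2] & d = phi p.
Proof.
move=> md od.
have dV1 : \dim (gU W d 1) = 1%N by rewrite (gmax_dim dW md).
have V1Wr : (gU W d 1 :&: Wr = 0)%VS.
  have := goppP od (ltnSn m); rewrite subSnn capvC => ->; by [].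
have [v V1v] : exists v, gU W d 1 = <[v]>%VS by exists (vpick (gU W d 1)); exact: point_line.
have vW : v \in W by rewrite memvE -V1v (gmax_sub md).
have v0 : v != 0%R by have := dV1; rewrite V1v dim_vline; case: (v != 0%R).
have vWr : v \notin Wr.
  apply: contra v0 => vWr; rewrite -memv0 -V1Wr memv_cap vWr andbT memvE -V1v.
  exact: subvv.
have WV : (<[v]> + Wr = W)%VS by apply: full_line; rewrite ?dW ?dWr ?WrW.
have WE : (<[e]> + Wr = W)%VS by apply: full_line; rewrite ?dW ?dWr ?WrW.
have : v \in (<[e]> + Wr)%VS by rewrite WE.
case/memv_addP => u /vlineP [a ->] [w wWr vE].
have a0 : a != 0%R.
  apply: contra vWr => /eqP a0; by rewrite vE a0 scale0r add0r.
have [h hWr eh] : exists2 h, h \in Wr & (e + h = a^-1 *: v)%R.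
  by exists (a^-1 *: w)%R; rewrite ?memvZ // vE scalerDr scalerA mulVf // scale1r.
have Leh : <[(e + h)%R]>%VS = gU W d 1 by rewrite eh vline_scale ?invr_eq0 // V1v.
pose d' := [ffun k : 'I_m => (gU W d k.+2 :&: Wr)%VS].
have gUd' k : k <= m.+1 -> gU Wr d' k = (gU W d k.+1 :&: Wr)%VS.
  case: k => [|k] le; first by rewrite gU0 V1Wr.
  case: (ltnP k m) => lt; first by rewrite gU_ltn ffunE.
  have -> : k = m by clia.
  by rewrite !gU_ge // (capv_idPr WrW).
clearbody d'.
have dec k : k <= m.+1 -> gU W d k.+1 = (<[v]> + gU Wr d' k)%VS.
  move=> le; rewrite gUd' // addvC vspace_modr; last first.
    by rewrite -V1v; apply: (gmax_mono md); clia.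
  by rewrite addvC WV (capv_idPl (gmax_sub md _)).
exists (h, d'); last first.
  apply/ffunP => k; rewrite /phi ffunE -(gU_lt W d) Leh V1v -dec //.
  by have := ltn_ord k; clia.
have md' : gmax Wr d'.
  apply: gmaxP => k le.
    have := @gmax_dim _ _ _ dW md k.+2; rewrite dec; last by clia.
    rewrite (line_dim vWr); last by rewrite gUd' ?capvSr //; clia.
    by move=> H; apply/eqP; rewrite -eqSS H //; clia.
  rewrite !gUd'; try clia.
  by apply: capvS => //; apply: (gmax_step md); clia.
rewrite /= hWr md' /=; apply/forallP => k; apply/eqP.
rewrite gU_cres; last by have := ltn_ord k; clia.
rewrite gUd'; last by clia.
apply/eqP; rewrite -subv0.
have := goppP od (leqW (ltn_ord k)).
have -> : (m.+1 - k.+1).+1 = (m.+2 - k.+1)%N by have := ltn_ord k; clia.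
move=> <-; apply: capvS => //; exact: capvSl.
Qed.

Lemma card_phi (P : pred {ffun 'I_m.+1 -> sp}) :
  #|[set d | [&& gmax W d, gopp W c d & P d]]| =
  #|[set p | [&& p.1 \in Wr, gmax Wr p.2, gopp Wr cres p.2 & P (phi p)]]|.
Proof.
rewrite -(card_in_imset (f := phi)); last first.
  move=> p1 p2; rewrite !inE => /and4P [h1 m1 _ _] /and4P [h2 m2 _ _].
  by apply: phi_inj; rewrite inE ?h1 ?h2 ?m1 ?m2.
apply: eq_card => d; rewrite inE.
apply/idP/imsetP.
  case/and3P => md od Pd; have [p Hp Ed] := phi_surj md od.
  exists p => //; rewrite inE; case/and3P: Hp => -> -> -> /=; by rewrite -Ed.
case=> p; rewrite inE => /and4P [h1 m1 o1 Pp] ->.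
by case/andP: (phi_ok h1 m1 o1) => -> ->.
Qed.

End Step.


Lemma count_gen m : forall (W Y : sp) (c : {ffun 'I_m -> sp}) j,
  \dim W = m.+1 -> gmax W c -> \dim Y = 1%N -> (Y <= W)%VS -> 0 < j <= m.+1 ->
  ~~ (Y <= gU W c (m.+1 - j))%VS ->
  #|[set d | [&& gmax W d, gopp W c d & (Y <= gU W d j)%VS]]| = (#|F| ^ ('C(m, 2) + j.-1))%N.
Proof.
elim: m => [|m IH] W Y c j dW mc dY YW /andP [j0 jm] nY.
  have -> : j = 1%N by clia.
  transitivity #|[set: {ffun 'I_0 -> sp}]|; last by rewrite cardsT card_ffun card_ord.
  apply: eq_card => d; rewrite !inE.
  have -> : gmax W d by apply/andP; split; apply/forallP => -[].
  have -> : gopp W c d by apply/forallP => -[].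
  by rewrite gU_ge.
case: j j0 jm nY => // j _ jm nY.
have dW' := dWr dW mc; have mc' := mcres dW mc; have W'W := WrW mc.
case: (boolP (Y <= Wr W c)%VS) => YW'.
  have j1 : 0 < j.
    case: j jm nY => // _; rewrite subSS subn0 => /negP; by [].
  have [e eW eW'] : exists2 e, e \in W & e \notin Wr W c.
    apply/subvPn; apply: contraTN isT => /dimvS; rewrite dW dW'; clia.
  rewrite (card_phi dW mc eW eW').
  transitivity #|setX [set h | h \in Wr W c]
     [set d' | [&& gmax (Wr W c) d', gopp (Wr W c) (cres c) d' & (Y <= gU (Wr W c) d' j)%VS]]|.
    apply: eq_card => -[h d']; rewrite !inE /=.
    case hW: (h \in Wr W c) => //=.
    case md: (gmax (Wr W c) d') => //=.
    rewrite (gU_phi dW mc eW eW') // (sub_line_cap (W := Wr W c)) //.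
    - exact: notin_add.
    - exact: (gmax_sub md).
  rewrite cardsX cardsE card_vspace dW' (IH (Wr W c) Y (cres c) j) //.
  - rewrite -expnD binS bin1; congr (_ ^ _)%N; clia.
  - by rewrite j1; clia.
  - by rewrite gU_cres // ?subSS //; clia.
have [e Ye] : exists e, Y = <[e]>%VS by exists (vpick Y); exact: point_line.
have eW : e \in W by rewrite memvE -Ye.
have eW' : e \notin Wr W c by rewrite memvE -Ye.
rewrite (card_phi dW mc eW eW').
transitivity #|[set p : vT * {ffun 'I_m -> sp} | (gmax (Wr W c) p.2 && gopp (Wr W c) (cres c) p.2)
    && (fun d' h => h \in gU (Wr W c) d' j) p.2 p.1]|.
  apply: eq_card => -[h d']; rewrite !inE /=.
  case md: (gmax (Wr W c) d'); last by rewrite !andbF.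
  case hW: (h \in Wr W c) => /=.
    by rewrite (gU_phi dW mc eW eW') // Ye -memvE (mem_line_add (W := Wr W c)) // (gmax_sub md).
  symmetry; apply/negbTE/negP => /andP [_ hD]; move: hW.
  by rewrite (subvP (gmax_sub md j) _ hD).
transitivity (#|[set y | gmax (Wr W c) y && gopp (Wr W c) (cres c) y]| * #|F| ^ j)%N.
  apply: (card_dep (A := fun y => gmax (Wr W c) y && gopp (Wr W c) (cres c) y)
                   (B := fun d' h => h \in gU (Wr W c) d' j)).
  move=> d' /andP [md _]; transitivity #|gU (Wr W c) d' j|; first by apply: eq_card.
  by rewrite card_vspace (gmax_dim dW' md).
have [y yW' y0] : exists2 y, y \in Wr W c & y != 0%R.
  by exists (vpick (Wr W c)); rewrite ?memv_pick // vpick0 -dimv_eq0 dW'.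
have := IH (Wr W c) <[y]>%VS (cres c) m.+1 dW' mc'.
rewrite dim_vline y0 -memvE yW' subnn gU0 subv0 -dimv_eq0 dim_vline y0 => /(_ erefl isT).
rewrite leqnn ltn0Sn => /(_ isT isT).
have -> : #|[set d | [&& gmax (Wr W c) d, gopp (Wr W c) (cres c) d & (<[y]> <= gU (Wr W c) d m.+1)%VS]]|
  = #|[set y0 | gmax (Wr W c) y0 && gopp (Wr W c) (cres c) y0]|.
  apply: eq_card => d; rewrite !inE gU_ge // -memvE yW'.
  by rewrite andbT.
move=> ->; rewrite -expnD binS bin1; congr (_ ^ _)%N; clia.
Qed.

End Gen.

Lemma type_le (F : finFieldType) n (d : flag F n) (X : {vspace 'rV[F]_n.+1}) k :
  is_max_flag d -> \dim X = 1%N -> k <= n.+1 ->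
  (flag_type d X <= k) = (X <= flagU d k)%VS.
Proof.
move=> md dX; rewrite /flag_type.
have md' : gmax fullv d := md.
case: k => [|k] le.
  by rewrite ltn0 /flagU subv0 -dimv_eq0 dX.
rewrite ltnS; case: (ltnP k n) => lt; last first.
  have -> : k = n by clia.
  rewrite (_ : flagU d n.+1 = gU fullv d n.+1) // gU_ge // subvf.
  by have := find_size (fun k => (X <= flagU d k)%VS) (iota 1 n); rewrite size_iota.
set p := (fun k => (X <= flagU d k)%VS).
apply/idP/idP => H.
  have hp : has p (iota 1 n) by rewrite has_find size_iota; clia.
  have := nth_find 0 hp; rewrite nth_iota; last by move: hp; rewrite has_find size_iota.
  rewrite /p => Ht; apply: subv_trans Ht _.
  change (gU fullv d (1 + find p (iota 1 n)) <= gU fullv d k.+1)%VS.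
  apply: (gmax_mono md'); clia.
rewrite leqNgt; apply/negP => lt2.
have := before_find 0 lt2; rewrite nth_iota // /p add1n => HF.
by move: H; rewrite HF.
Qed.

Theorem mainTheorem3 (F : finFieldType) (n : nat) (X : {vspace 'rV[F]_n.+1})
  (i j : nat) (c : flag F n) :
  (1 <= n)%N -> \dim X = 1%N ->
  (1 <= i <= n.+1)%N -> (1 <= j <= n.+1)%N ->
  is_max_flag c -> flag_type c X = i ->
  (#|[set d : flag F n | [&& is_max_flag d, flag_type d X == j & opposite c d]]|%:R : rat)
  = (if (i + j < n + 2)%N then 0
     else (#|F|%:R - 1 + (i + j == n + 2)%N%:R) *
          (#|F|%:R : rat) ^ (((n ^ 2 - n) %/ 2)%:Z + j%:Z - 2%:Z))%R.
Proof.
move=> n1 dX /andP [i1 iN] /andP [j1 jN] mc ti.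
have dF : \dim (fullv : {vspace 'rV[F]_n.+1}) = n.+1.
  by rewrite dimvf /dim /= mul1n.
have mc' : gmax fullv c := mc.
pose A k := [set d : flag F n | [&& is_max_flag d, opposite c d & (X <= flagU d k)%VS]].
have cU k : k <= n.+1 -> (X <= flagU c k)%VS = (i <= k) by move=> le; rewrite -type_le // ti.
have cardA k : 0 < k <= n.+1 ->
    #|A k| = if (i + k < n + 2) then 0 else (#|F| ^ ('C(n, 2) + k.-1))%N.
  case/andP => k0 kN; case: ifP => ik.
    apply/eqP; rewrite cards_eq0; apply/eqP/setP => d; rewrite !inE.
    apply/negbTE/and3P => -[md od Xd].
    have XU : (X <= flagU c (n.+1 - k))%VS by rewrite cU; clia.
    case E: (n.+1 - k) XU => [|a] XU.
      by move: XU; rewrite /flagU subv0 -dimv_eq0 dX.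
    have a_n : a < n by clia.
    have := goppP od a_n; rewrite (_ : n.+1 - a.+1 = k); last by clia.
    move=> H; have : (X <= 0)%VS.
      by rewrite -H subv_cap; apply/andP; split; [exact: XU | exact: Xd].
    by rewrite subv0 -dimv_eq0 dX.
  move/negbT: ik; rewrite -leqNgt => ik.
  have := count_gen dF mc' dX (subvf X) (j := k).
  rewrite k0 kN cU; last by clia.
  have -> : i <= n.+1 - k = false by apply/negbTE; rewrite -ltnNge; clia.
  by move=> /(_ isT isT).
have A0 : #|A 0| = 0%N.
  apply/eqP; rewrite cards_eq0; apply/eqP/setP => d; rewrite !inE.
  by rewrite /flagU subv0 -dimv_eq0 dX !andbF.
have sub : A j.-1 \subset A j.
  apply/subsetP => d; rewrite !inE => /and3P [md od Xd]; rewrite md od /=.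
  have md' : gmax fullv d := md.
  apply: subv_trans Xd _.
  change (gU fullv d j.-1 <= gU fullv d j)%VS; apply: (gmax_mono md'); clia.
have -> : [set d : flag F n | [&& is_max_flag d, flag_type d X == j & opposite c d]]
    = A j :\: A j.-1.
  apply/setP => d; rewrite !inE.
  case md: (is_max_flag d) => //=.
  have -> : (flag_type d X == j) = (flag_type d X <= j) && ~~ (flag_type d X <= j.-1).
    have key : forall t u, 0 < u -> (t == u) = (t <= u) && ~~ (t <= u.-1).
      by move=> t [|u] //= _; rewrite eqn_leq -ltnNge.
    exact: key.
  rewrite !type_le //; last by clia.
  by case: (opposite c d); case: (X <= flagU d j)%VS; case: (X <= flagU d j.-1)%VS.
rewrite cardsD (setIidPr sub).
have eC : ((n ^ 2 - n) %/ 2)%N = 'C(n, 2).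
  by rewrite bin2 -divn2 -subn1 mulnBr muln1.
rewrite eC.
have q0 : (#|F|%:R : rat) != 0%R by rewrite pnatr_eq0 -lt0n; apply/card_gt0P; exists 0%R.
have Aj1 : (i + j.-1 < n + 2)%N -> #|A j.-1| = 0%N.
  move=> h; case: (posnP j.-1) => [->|p]; first exact: A0.
  rewrite cardA; first by rewrite h.
  by apply/andP; split; clia.
rewrite cardA ?j1 //.
case: ltnP => ij.
  by rewrite Aj1 //; clia.
case: (boolP (i + j == n + 2)) => [/eqnP ije | ne].
  rewrite Aj1; last by clia.
  rewrite subn0 natrX.
  have ez : ('C(n, 2)%:Z + j%:Z - 2%:Z = ('C(n, 2) + j.-1)%N%:Z - 1)%R by clia.
  rewrite ez expfzDr // exprN1 (_ : (true%:R : rat) = 1%R) // subrK.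
  by rewrite mulrCA mulfV // mulr1.
have qpos : 0 < #|F| by apply/card_gt0P; exists 0%R.
have ij2 : n + 2 < i + j by rewrite ltn_neqAle eq_sym ne ij.
rewrite (cardA j.-1); last by apply/andP; split; clia.
rewrite ifF; last by apply/negbTE; rewrite -leqNgt; clia.
have ez : ('C(n, 2)%:Z + j%:Z - 2%:Z = ('C(n, 2) + j.-2)%N%:Z)%R by clia.
have ee : ('C(n, 2) + j.-1 = ('C(n, 2) + j.-2).+1)%N by clia.
rewrite ee natrB; last by rewrite expnS leq_pmull.
rewrite !natrX exprS ez (_ : (false%:R : rat) = 0%R) // addr0 mulrBl mul1r.
by [].
Qed.
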